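(* Let $R$ be a field, $S$ an idempotent semifield and $v:R\to S$ a surjective B\'ezout valuation. Then $\operatorname{Frac}(R^\circ)=R$, $R^\circ$ is a B\'ezout domain, and $v$ is isomorphic to the valuation $\operatorname{Frac}(\pi):\operatorname{Frac}(R^\circ)\to\operatorname{Frac}(\Gamma(R^\circ))$; i.e. there is a semifield isomorphism $\Phi:\operatorname{Frac}(\Gamma(R^\circ))\to S$ with $v=\Phi\circ\operatorname{Frac}(\pi)$.
   Context: An idempotent semiring is commutative with $a+a=a$, ordered by $a\le b$ iff $a+b=b$; a semifield has nonzero elements invertible. A valuation $v:R\to S$ satisfies $v(0)=0$, $v(1)=v(-1)=1$, $v(ab)=v(a)v(b)$, $v(a+b)\le v(a)+v(b)$, $v(a)\ne0$ for $a\ne0$. $R^\circ=\{a:v(a)\le1\}$. $v$ is B\'ezout if for all $a,b\in R$ there are $x,y\in R^\circ$ with $v(xa+yb)=v(a)+v(b)$. For a B\'ezout domain $D$ (every finitely generated ideal principal), $\Gamma(D)=D/U(D)$ is the set of classes of elements up to units, an idempotent semiring with $[a][b]=[ab]$ and $[a]+[b]=[\gcd(a,b)]$; $\pi:D\to\Gamma(D)$ is the projection; $\Gamma(D)$ is multiplicatively cancellative and $\operatorname{Frac}(\pi)(a/b)=\pi(a)/\pi(b)$. *)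

(* Defs.v *)
From HB Require Import structures.
From mathcomp Require Import all_boot all_order all_algebra.
Set Implicit Arguments. Unset Strict Implicit. Unset Printing Implicit Defensive.
Import Order.TTheory GRing.Theory.
Local Open Scope ring_scope.

Definition idempotent_semiring (S : comNzSemiRingType) : Prop :=
  forall a : S, a + a = a.

Definition semifield (S : comNzSemiRingType) : Prop :=
  forall a : S, a != 0 -> exists b : S, a * b = 1.

Definition sle (S : comNzSemiRingType) (a b : S) : Prop := a + b = b.

Definition valuation (R : fieldType) (S : comNzSemiRingType) (v : R -> S) : Prop :=
  [/\ v 0 = 0, v 1 = 1, v (-1) = 1,
      (forall a b, v (a * b) = v a * v b) &
      ((forall a b, sle (v (a + b)) (v a + v b)) /\
       (forall a, a != 0 -> v a != 0))].

(* R° = { a | v a <= 1 } *)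
Definition vring (R : fieldType) (S : comNzSemiRingType) (v : R -> S) : pred R :=
  fun a => v a + 1 == 1.

Definition bezout_valuation (R : fieldType) (S : comNzSemiRingType) (v : R -> S)
  : Prop :=
  valuation v /\
  forall a b : R, exists x y : R,
    [/\ x \in vring v, y \in vring v & v (x * a + y * b) = v a + v b].

Section SubringOfField.
Variable R : fieldType.
Implicit Types (D : pred R) (a b c d g u x y : R).

Definition subring D : Prop :=
  [/\ 1 \in D, (forall a b, a \in D -> b \in D -> a - b \in D) &
      (forall a b, a \in D -> b \in D -> a * b \in D)].

Definition dvdD D a b : Prop := exists c, c \in D /\ b = a * c.

Definition unitD D u : Prop := [/\ u \in D, u != 0 & u^-1 \in D].

Definition assocD D a b : Prop := exists u, unitD D u /\ a = u * b.

Definition gcdD D g a b : Prop :=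
  [/\ g \in D, dvdD D g a, dvdD D g b &
      forall c, c \in D -> dvdD D c a -> dvdD D c b -> dvdD D c g].

(* D is a Bezout domain: a subring of the field R (hence an integral domain)
   in which every finitely generated ideal is principal. *)
Definition bezout_domain D : Prop :=
  subring D /\
  forall s : seq R, all (mem D) s ->
    exists d, [/\ d \in D,
      (exists cs : seq R, [/\ size cs = size s, all (mem D) cs &
          d = \sum_(i < size s) cs`_i * s`_i]) &
      forall a, a \in s -> dvdD D d a].

(* Frac(D) = R : every element of R is a quotient of elements of D *)
Definition frac_is D : Prop :=
  forall a, exists x y, [/\ x \in D, y \in D, y != 0 & a = x / y].

End SubringOfField.

(* ---------- Frac(Gamma(D)) via representatives ----------
   Elements of Gamma(D) are classes [x] of x in D up to units; elements of
   Frac(Gamma(D)) are fractions [x]/[y] with y != 0, and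
   [x]/[y] = [x']/[y'] iff [x y'] = [x' y] (Gamma(D) is cancellative).
   Operations: ([x]/[y]) * ([x']/[y']) = [x x']/[y y'],
               ([x]/[y]) + ([x']/[y']) = [gcd(x y', x' y)]/[y y'],
               0 = [0]/[1], 1 = [1]/[1].
   Frac(pi)(x/y) = pi(x)/pi(y) = [x]/[y].
   A map Phi : Frac(Gamma(D)) -> S is represented by Phi x y := Phi([x]/[y]). *)
Definition fracgamma_iso (R : fieldType) (S : comNzSemiRingType) (D : pred R)
  (Phi : R -> R -> S) : Prop :=
  let fr x y := [/\ x \in D, y \in D & y != 0] in
  [/\ (* well defined and injective on classes *)
      (forall x y x' y', fr x y -> fr x' y' ->
         (Phi x y = Phi x' y' <-> assocD D (x * y') (x' * y))),
      (forall s : S, exists x y, fr x y /\ Phi x y = s),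
      Phi 0 1 = 0 /\ Phi 1 1 = 1,
      (forall x y x' y', fr x y -> fr x' y' ->
         Phi (x * x') (y * y') = Phi x y * Phi x' y') &
      (* preserves addition *)
      (forall x y x' y' g, fr x y -> fr x' y' -> gcdD D g (x * y') (x' * y) ->
         Phi g (y * y') = Phi x y + Phi x' y')].

(* Main.v *)
Require Import Defs.
From HB Require Import structures.
From mathcomp Require Import all_boot all_order all_algebra.
Import GRing.Theory.
Local Open Scope ring_scope.
Set Implicit Arguments. Unset Strict Implicit.

Lemma sle_refl (S : comNzSemiRingType) (hi : idempotent_semiring S) (a : S) : sle a a.
Proof. exact: hi. Qed.

Lemma sle_anti (S : comNzSemiRingType) (a b : S) : sle a b -> sle b a -> a = b.
Proof. by rewrite /sle => h1 h2; rewrite -h2 addrC h1. Qed.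

Lemma sle_trans (S : comNzSemiRingType) (a b c : S) : sle a b -> sle b c -> sle a c.
Proof. by rewrite /sle => h1 h2; rewrite -h2 addrA h1. Qed.

Lemma sle_addl (S : comNzSemiRingType) (hi : idempotent_semiring S) (a b : S) :
  sle a (a + b).
Proof. by rewrite /sle addrA hi. Qed.

Lemma sle_addr (S : comNzSemiRingType) (hi : idempotent_semiring S) (a b : S) :
  sle b (a + b).
Proof. by rewrite addrC; apply: sle_addl. Qed.

Lemma sle_lub (S : comNzSemiRingType) (a b c : S) :
  sle a c -> sle b c -> sle (a + b) c.
Proof. by rewrite /sle => h1 h2; rewrite -addrA h2 h1. Qed.

Lemma sle_mulr (S : comNzSemiRingType) (a b c : S) : sle a b -> sle (a * c) (b * c).
Proof. by rewrite /sle => h; rewrite -mulrDl h. Qed.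

Lemma sle_mull (S : comNzSemiRingType) (a b c : S) : sle a b -> sle (c * a) (c * b).
Proof. by rewrite /sle => h; rewrite -mulrDr h. Qed.

Lemma add_eq0l (S : comNzSemiRingType) (hi : idempotent_semiring S) (a b : S) :
  a + b = 0 -> a = 0.
Proof. by move=> h; have := sle_addl hi a b; rewrite /sle h addr0. Qed.

Lemma sle_mul1 (S : comNzSemiRingType) (a b : S) : sle a 1 -> sle b 1 -> sle (a * b) 1.
Proof.
move=> ha hb; apply: (sle_trans (b := 1 * b)); first exact: sle_mulr.
by rewrite mul1r.
Qed.

Lemma vN (R : fieldType) (S : comNzSemiRingType) (v : R -> S) (hv : valuation v) a :
  v (- a) = v a.
Proof. by case: hv => _ _ vm1 vM _; rewrite -mulN1r vM vm1 mul1r. Qed.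

Lemma vinv (R : fieldType) (S : comNzSemiRingType) (v : R -> S) (hv : valuation v) a :
  a != 0 -> v a * v a^-1 = 1.
Proof. by case: hv => _ v1 _ vM _ ha; rewrite -vM mulfV. Qed.

Lemma v_eq0 (R : fieldType) (S : comNzSemiRingType) (v : R -> S) (hv : valuation v) a :
  v a = 0 -> a = 0.
Proof.
case: hv => _ _ _ _ [_ vnz] h; case: (eqVneq a 0) => // /vnz.
by rewrite h eqxx.
Qed.

Lemma inD (R : fieldType) (S : comNzSemiRingType) (v : R -> S) a :
  (a \in vring v) <-> sle (v a) 1.
Proof. by rewrite /sle; split => [/eqP //|h]; apply/eqP. Qed.

Lemma div_inD (R : fieldType) (S : comNzSemiRingType) (v : R -> S) (hv : valuation v)
  a g : g != 0 -> sle (v a) (v g) -> a / g \in vring v.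
Proof.
move=> gn0 h; apply/inD; have [_ _ _ vM _] := hv.
by rewrite vM -(vinv hv gn0); apply: sle_mulr.
Qed.

Lemma dvd_div (R : fieldType) (S : comNzSemiRingType) (v : R -> S) (hv : valuation v)
  a g : g != 0 -> sle (v a) (v g) -> dvdD (vring v) g a.
Proof.
move=> gn0 h; exists (a / g); split; first exact: div_inD.
by rewrite mulrC divfK.
Qed.

Lemma dvd_le (R : fieldType) (S : comNzSemiRingType) (hi : idempotent_semiring S) (v : R -> S) (hv : valuation v)
  a g : dvdD (vring v) g a -> sle (v a) (v g).
Proof.
have [_ _ _ vM _] := hv.
move=> [c [/inD hc ->]]; rewrite vM.
apply: (sle_trans (b := v g * 1)); [apply: sle_mull | rewrite mulr1] => //.
Qed.

Lemma dvd_trans (R : fieldType) (S : comNzSemiRingType) (v : R -> S) (hv : valuation v)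
  a b c : dvdD (vring v) a b -> dvdD (vring v) b c -> dvdD (vring v) a c.
Proof.
have [_ _ _ vM _] := hv.
move=> [d [/inD hd ->]] [e [/inD he ->]]; exists (d * e); split; last by rewrite mulrA.
by apply/inD; rewrite vM; apply: sle_mul1.
Qed.

Lemma D0 (R : fieldType) (S : comNzSemiRingType) (v : R -> S) (hv : valuation v) :
  0 \in vring v.
Proof. by have [v0 _ _ _ _] := hv; apply/inD; rewrite v0 /sle add0r. Qed.

Lemma D1 (R : fieldType) (S : comNzSemiRingType) (hi : idempotent_semiring S)
  (v : R -> S) (hv : valuation v) : 1 \in vring v.
Proof. by have [_ v1 _ _ _] := hv; apply/inD; rewrite v1; apply: sle_refl. Qed.

Lemma DM (R : fieldType) (S : comNzSemiRingType) (v : R -> S) (hv : valuation v) a b :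
  a \in vring v -> b \in vring v -> a * b \in vring v.
Proof.
have [_ _ _ vM _] := hv.
by move=> /inD ha /inD hb; apply/inD; rewrite vM; apply: sle_mul1.
Qed.

Lemma DD (R : fieldType) (S : comNzSemiRingType) (hi : idempotent_semiring S)
  (v : R -> S) (hv : valuation v) a b :
  a \in vring v -> b \in vring v -> a + b \in vring v.
Proof.
have [_ _ _ _ [vD _]] := hv.
move=> /inD ha /inD hb; apply/inD; apply: (sle_trans (vD a b)).
exact: sle_lub.
Qed.

Lemma DN (R : fieldType) (S : comNzSemiRingType) (v : R -> S) (hv : valuation v) a :
  a \in vring v -> - a \in vring v.
Proof. by move=> /inD ha; apply/inD; rewrite (vN hv). Qed.

Lemma bez_gcd (R : fieldType) (S : comNzSemiRingType) (hi : idempotent_semiring S)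
  (v : R -> S) (hv : bezout_valuation v) a b :
  exists h, [/\ v h = v a + v b, dvdD (vring v) h a, dvdD (vring v) h b &
    exists x y, [/\ x \in vring v, y \in vring v & h = x * a + y * b]].
Proof.
have [hval hb] := hv; have [x [y [Dx Dy hh]]] := hb a b.
exists (x * a + y * b); split => //; last by exists x, y.
- case: (eqVneq (x * a + y * b) 0) => [h0|hn0].
    have a0 : a = 0 by apply: (v_eq0 hval); apply: (add_eq0l hi (b := v b)); rewrite -hh h0; by case: hval.
    by exists 0; split; [apply: D0 | rewrite a0 mulr0].
  by apply: dvd_div => //; rewrite hh; apply: sle_addl.
- case: (eqVneq (x * a + y * b) 0) => [h0|hn0].
    have b0 : b = 0 by apply: (v_eq0 hval); apply: (add_eq0l hi (b := v a)); rewrite addrC -hh h0; by case: hval.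
    by exists 0; split; [apply: D0 | rewrite b0 mulr0].
  by apply: dvd_div => //; rewrite hh; apply: sle_addr.
Qed.

Unset Implicit Arguments.

Theorem lemma2p15 (R : fieldType) (S : comNzSemiRingType) (v : R -> S)
  (hidem : idempotent_semiring S) (hsf : semifield S)
  (hv : bezout_valuation v) (hsurj : forall s : S, exists a : R, v a = s) :
  [/\ frac_is (vring v),
      bezout_domain (vring v) &
      exists Phi : R -> R -> S,
        fracgamma_iso (vring v) Phi /\
        (forall x y, x \in vring v -> y \in vring v -> y != 0 ->
           v (x / y) = Phi x y)].
Proof.
have hval := hv.1.
have [v0 v1 vm1 vM [vD vnz]] := hval.
have hfrac : frac_is (vring v).
  move=> a; have [d [hd _ _ _]] := bez_gcd hidem hv a 1.
  have dn0 : d != 0.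
    apply/eqP => d0; move: hd; rewrite d0 v0 v1 => /esym; rewrite addrC.
    by move=> /(add_eq0l hidem)/eqP; rewrite oner_eq0.
  exists (a / d), d^-1; split.
  - by apply: div_inD => //; rewrite hd; apply: sle_addl.
  - by rewrite -div1r; apply: div_inD => //; rewrite hd v1; apply: sle_addr.
  - by rewrite invr_eq0.
  - by rewrite invrK divfK.
split => //.
- split.
    split; first exact: D1.
      by move=> a b Da Db; apply: DD => //; apply: DN.
    by move=> a b; apply: DM.
  elim => [|a s IH].
    move=> _; exists 0; split; first exact: D0.
      by exists [::]; split => //; rewrite big_ord0.
    by [].
  move=> /= /andP [Da Ds]; have [d [Dd [cs [szcs Dcs ed]] dvd]] := IH Ds.
  have [h [_ ha hd [x [y [Dx Dy eh]]]]] := bez_gcd hidem hv a d.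
  exists h; split.
  - by rewrite eh; apply: DD => //; apply: DM.
  - exists (x :: map (fun c => y * c) cs); split.
    + by rewrite /= size_map szcs.
    + rewrite /= Dx /= all_map; apply/allP => c hc /=.
      by apply: DM => //; apply: (allP Dcs).
    + rewrite big_ord_recl /= eh ed mulr_sumr; congr (_ + _).
      apply: eq_bigr => i _; rewrite add0n (nth_map 0) ?mulrA // szcs.
      exact: ltn_ord.
  - move=> b; rewrite inE => /orP [/eqP -> //|bs].
    by apply: (dvd_trans hval hd); apply: dvd.
exists (fun x y => v (x / y)); split => //.
split.
- move=> x y x' y' [Dx Dy yn0] [Dx' Dy' yn0']; split.
  + move=> he; case: (eqVneq x 0) => [x0|xn0].
      have x'0 : x' = 0.
        have : x' / y' = 0 by apply: (v_eq0 hval); rewrite -he x0 mul0r.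
        by move/eqP; rewrite mulf_eq0 invr_eq0 (negPf yn0') orbF => /eqP.
      exists 1; split; last by rewrite x0 x'0 !mul0r mulr0.
      by split; [apply: D1 | apply: oner_neq0 | rewrite invr1; apply: D1].
    have zn1 : x / y != 0 by rewrite mulf_eq0 invr_eq0 negb_or xn0 yn0.
    have x'n0 : x' != 0.
      apply/eqP => x'0; have : x / y = 0 by apply: (v_eq0 hval); rewrite he x'0 mul0r.
      by move/eqP; rewrite (negPf zn1).
    have zn0 : x' / y' != 0 by rewrite mulf_eq0 invr_eq0 negb_or x'n0 yn0'.
    exists ((x / y) * (x' / y')^-1); split; last first.
      by rewrite invf_div -!mulrA mulKf // [y' * y]mulrC mulKf.
    split.
    * apply/inD; rewrite vM he vinv //; apply: sle_refl hidem _.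
    * by rewrite mulf_eq0 negb_or zn1 invr_eq0 zn0.
    * apply/inD; rewrite invfM invrK vM mulrC -he vinv //; apply: sle_refl hidem _.
  + move=> [u [[Du un0 Dui] eu]].
    have vu : v u = 1.
      move/inD: Du => Du; move/inD: Dui => Dui.
      apply: sle_anti => //; rewrite -(vinv hval un0).
      by apply: (sle_trans (b := v u * 1)); [apply: sle_mull | rewrite mulr1; apply: sle_refl hidem _].
    have e1 : x / y = (x * y') / (y * y') by rewrite invfM mulrACA mulfV // mulr1.
    have e2 : x' / y' = (x' * y) / (y * y').
      by rewrite [y * y']mulrC invfM mulrACA mulfV // mulr1.
    by rewrite e1 e2 !(vM (_ * _)) eu vM vu mul1r.
- move=> s; have [a <-] := hsurj s; have [x [y [Dx Dy yn0 ->]]] := hfrac a.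
  by exists x, y.
- by rewrite divr1 v0 divr1 v1.
- move=> x y x' y' _ _; rewrite -vM; congr (v _).
  by rewrite invfM mulrACA.
- move=> x y x' y' g [Dx Dy yn0] [Dx' Dy' yn0'] [Dg gp gq gmax].
  have [h [vh hp hq [a [b [Da Db eh]]]]] := bez_gcd hidem hv (x * y') (x' * y).
  have Dh : h \in vring v by rewrite eh; apply: DD => //; apply: DM => //; apply: DM.
  have vg : v g = v (x * y') + v (x' * y).
    apply: sle_anti.
      rewrite -vh; exact: (dvd_le hidem hval (gmax h Dh hp hq)).
    by apply: sle_lub; [exact: (dvd_le hidem hval gp) | exact: (dvd_le hidem hval gq)].
  have e1 : x / y = (x * y') / (y * y') by rewrite invfM mulrACA mulfV // mulr1.
  have e2 : x' / y' = (x' * y) / (y * y').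
    by rewrite [y * y']mulrC invfM mulrACA mulfV // mulr1.
  by rewrite e1 e2 !(vM _ (y * y')^-1) vg mulrDl.
Qed.
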